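(* Let $k\ge2$ and let $\mathcal{H}=(V,E)$ be a $k$-uniform linear hypergraph with $n$ vertices satisfying $n\le k^2+k-2$. Then $\mathrm{q}(\mathcal{H})\le \Delta([\mathcal{H}]_2)+1$.
   Context: A hypergraph $\mathcal{H}=(V,E)$ has a finite vertex set $V$ and a finite set $E$ of nonempty subsets of $V$ (hyperedges); linear means distinct hyperedges share at most one vertex; $k$-uniform means every hyperedge has $k$ elements. The 2-section $[\mathcal{H}]_2$ is the simple graph on $V$ where distinct vertices are adjacent iff some hyperedge contains both; $\Delta([\mathcal{H}]_2)$ is its maximum degree. The chromatic index $\mathrm{q}(\mathcal{H})$ is the least number of colors in a coloring of hyperedges where distinct intersecting hyperedges get different colors. *)

(* Defs.v *)
From mathcomp Require Import all_boot.
Set Implicit Arguments. Unset Strict Implicit. Unset Printing Implicit Defensive.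

Definition hypergraph (V : finType) (E : {set {set V}}) : Prop :=
  forall e, e \in E -> e != set0.

Definition linear_hg (V : finType) (E : {set {set V}}) : Prop :=
  forall e f, e \in E -> f \in E -> e != f -> #|e :&: f| <= 1.

Definition uniform_hg (V : finType) (k : nat) (E : {set {set V}}) : Prop :=
  forall e, e \in E -> #|e| = k.

Definition sec2_adj (V : finType) (E : {set {set V}}) (u v : V) : bool :=
  (u != v) && [exists e in E, (u \in e) && (v \in e)].

Definition sec2_deg (V : finType) (E : {set {set V}}) (v : V) : nat :=
  #|[set u | sec2_adj E v u]|.

(* maximum degree of the 2-section (0 if V is empty) *)
Definition sec2_maxdeg (V : finType) (E : {set {set V}}) : nat :=
  \max_(v : V) sec2_deg E v.

Definition proper_edge_coloring (V : finType) (E : {set {set V}}) (m : nat)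
  (c : {ffun {set V} -> 'I_m}) : bool :=
  [forall e in E, forall f in E, (e != f) && (e :&: f != set0) ==> (c e != c f)].

Arguments proper_edge_coloring V E m c : clear implicits.
Definition edge_colorable (V : finType) (E : {set {set V}}) (m : nat) : bool :=
  [exists c : {ffun {set V} -> 'I_m}, proper_edge_coloring V E m c].

Lemma edge_colorable_exists (V : finType) (E : {set {set V}}) :
  exists m, edge_colorable E m.
Proof.
exists #|{set V}|; apply/existsP.
exists [ffun e => enum_rank e]; apply/forallP=> e; apply/implyP=> _.
apply/forallP=> f; apply/implyP=> _; apply/implyP=> /andP[nef _].
by rewrite !ffunE (inj_eq enum_rank_inj).
Qed.

Definition chromatic_index (V : finType) (E : {set {set V}}) : nat :=
  ex_minn (edge_colorable_exists E).

(* Main.v *)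
Require Import Defs.
From mathcomp Require Import all_boot.
From mathcomp Require Import zify.
Set Implicit Arguments. Unset Strict Implicit. Unset Printing Implicit Defensive.

Lemma card_bigcup_disj (T I : finType) (F : I -> {set T}) (n : nat) :
  forall A : {set I}, #|A| = n ->
  {in A &, forall i j, i != j -> [disjoint F i & F j]} ->
  #|\bigcup_(i in A) F i| = \sum_(i in A) #|F i|.
Proof.
elim: n => [|n IH] A cA dis.
  move/eqP: cA; rewrite cards_eq0 => /eqP ->.
  by rewrite !big_set0 cards0.
have [a aA]: exists a, a \in A.
  by apply/set0Pn; rewrite -card_gt0 cA.
rewrite (bigD1 a aA) (bigD1 a aA) /=.
have e1 : \bigcup_(i in A | i != a) F i = \bigcup_(i in A :\ a) F i.
  by apply: eq_bigl => i; rewrite !inE andbC.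
have e2 : \sum_(i in A | i != a) #|F i| = \sum_(i in A :\ a) #|F i|.
  by apply: eq_bigl => i; rewrite !inE andbC.
rewrite e1 e2 -(IH (A :\ a)); last first.
- by move=> i j; rewrite !inE => /andP[_ iA] /andP[_ jA]; apply: dis.
- by move: cA; rewrite (cardsD1 a) aA add1n => -[].
rewrite cardsU.
have -> : F a :&: \bigcup_(i in A :\ a) F i = set0.
  apply/eqP; rewrite setI_eq0; apply/bigcup_disjointP.
  move=> i; rewrite !inE => /andP[ia iA]; apply: dis => //.
  by rewrite eq_sym.
by rewrite cards0 subn0.
Qed.

Definition lines (V : finType) (F : {set {set V}}) (x : V) := [set f in F | x \in f].
Definition ustar (V : finType) (F : {set {set V}}) (x : V) :=
  \bigcup_(f in lines F x) (f :\ x).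

Lemma lin2 (V : finType) (E : {set {set V}}) f g x y :
  linear_hg E -> f \in E -> g \in E -> x \in f -> x \in g -> y \in f -> y \in g ->
  x != y -> f = g.
Proof.
move=> lin fE gE xf xg yf yg xy; apply/eqP; apply: contraT => nfg.
have := lin f g fE gE nfg.
have: [set x; y] \subset f :&: g.
  by apply/subsetP=> z; rewrite !inE => /orP[] /eqP ->; rewrite ?xf ?xg ?yf ?yg.
by move/subset_leq_card; rewrite cards2 xy => /leq_trans H /H.
Qed.

Lemma card_ustar (V : finType) k (E F : {set {set V}}) x :
  F \subset E -> uniform_hg k E -> linear_hg E ->
  #|ustar F x| = (k - 1) * #|lines F x|.
Proof.
move=> FE uni lin; rewrite /ustar (card_bigcup_disj (n := #|lines F x|)) //.
  rewrite -sum1_card big_distrr /= muln1; apply: eq_bigr => f.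
  rewrite inE => /andP[fF xf]; have := cardsD1 x f; rewrite xf uni ?(subsetP FE) //.
  move=> ->; lia.
move=> f g; rewrite !inE => /andP[fF xf] /andP[gF xg] fg.
rewrite -setI_eq0; apply/eqP/setP => y; rewrite !inE.
apply/negbTE/negP => /andP[/andP[yx yf] /andP[_ yg]]; move/negP: fg; apply.
apply/eqP; apply: (lin2 (E:=E) (x := x) (y := y)) => //; try exact: (subsetP FE).
by rewrite eq_sym.
Qed.

Lemma ustar_adj (V : finType) (E F : {set {set V}}) x :
  F \subset E -> ustar F x \subset [set u | sec2_adj E x u].
Proof.
move=> FE; apply/subsetP => u /bigcupP[f]; rewrite !inE => /andP[fF xf] /andP[ux uf].
rewrite /sec2_adj eq_sym ux /=; apply/existsP; exists f.
by rewrite (subsetP FE) ?xf ?uf.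
Qed.

Lemma deg_le_V (V : finType) (E : {set {set V}}) x : sec2_deg E x <= #|V| - 1.
Proof.
rewrite /sec2_deg; have : [set u | sec2_adj E x u] \subset [set~ x].
  by apply/subsetP => u; rewrite !inE /sec2_adj eq_sym => /andP[].
move/subset_leq_card; rewrite cardsC1; lia.
Qed.

Lemma maxdeg_le_V (V : finType) (E : {set {set V}}) : sec2_maxdeg E <= #|V| - 1.
Proof. by rewrite /sec2_maxdeg; apply/bigmax_leqP => x _; apply: deg_le_V. Qed.

Lemma lines_bound (V : finType) k (E F : {set {set V}}) x :
  F \subset E -> uniform_hg k E -> linear_hg E ->
  (k - 1) * #|lines F x| <= sec2_maxdeg E.
Proof.
move=> FE uni lin; rewrite -(card_ustar x FE uni lin).
apply: leq_trans (subset_leq_card (ustar_adj x FE)) _.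
rewrite /sec2_maxdeg; exact: (@leq_bigmax _ (fun v => sec2_deg E v) x).
Qed.

Definition nbr (V : finType) (F : {set {set V}}) (e : {set V}) :=
  [set f in F | (f != e) && (f :&: e != set0)].

Lemma card_bigcup_le (T I : finType) (A : {set I}) (F : I -> {set T}) :
  #|\bigcup_(i in A) F i| <= \sum_(i in A) #|F i|.
Proof.
apply: (big_ind2 (fun (X : {set T}) (n : nat) => #|X| <= n)) => //.
- by rewrite cards0.
- move=> X n Y m hX hY; rewrite cardsU; lia.
Qed.

Lemma nbr_bound (V : finType) (F : {set {set V}}) e :
  e \in F -> #|nbr F e| <= \sum_(x in e) (#|lines F x| - 1).
Proof.
move=> eF.
have sub : nbr F e \subset \bigcup_(x in e) (lines F x :\ e).
  apply/subsetP => f; rewrite inE => /andP[fF /andP[fe /set0Pn[x]]].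
  rewrite inE => /andP[xf xe]; apply/bigcupP; exists x => //.
  by rewrite !inE fe fF xf.
apply: leq_trans (subset_leq_card sub) _.
apply: leq_trans (card_bigcup_le _ _) _.
apply: leq_sum => x xe; rewrite (cardsD1 e (lines F x)) inE eF xe; lia.
Qed.

Lemma arith1 k D d n : 2 <= k -> (k-1)*D <= d -> d <= n - 1 -> n <= k^2+k-2 ->
  d + 1 <= k*(D-1) -> D = k+1 /\ d = k^2-1.
Proof.
move=> k2 h1 h2 h3 h4.
have hD1 : k + 1 <= D.
  case: (leqP (k+1) D) => // lt; exfalso.
  have : k * (D - 1) <= (k-1) * D by nia.
  lia.
have hD2 : D <= k + 1.
  case: (leqP D (k+1)) => // lt; exfalso.
  have : (k-1) * (k+2) <= (k-1) * D by apply: leq_mul => //; lia.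
  have : (k-1)*(k+2) = k^2 + k - 2 by nia.
  lia.
have eD : D = k+1 by lia.
subst D; split => //.
have : (k-1)*(k+1) = k^2 - 1 by nia.
have : k*(k+1-1) = k^2 by nia.
lia.
Qed.

Lemma tight (V : finType) k (E F : {set {set V}}) e :
  2 <= k -> F \subset E -> uniform_hg k E -> linear_hg E ->
  #|V| <= k ^ 2 + k - 2 -> e \in F ->
  sec2_maxdeg E + 1 <= #|nbr F e| ->
  sec2_maxdeg E = k ^ 2 - 1 /\ forall x, x \in e -> #|lines F x| = k + 1.
Proof.
move=> k2 FE uni lin cV eF big.
have ce : #|e| = k by apply: uni; apply: (subsetP FE).
have dV := maxdeg_le_V E.
have lb := fun x => lines_bound x FE uni lin.
have nb := nbr_bound eF.
have [x0 x0e Dx0] := @eq_bigmax_cond _ (mem e) (fun x => #|lines F x|) (ltac:(rewrite ce; lia)).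
set D := \max_(x in e) #|lines F x| in Dx0.
have leD : forall x, x \in e -> #|lines F x| <= D.
  by move=> x xe; apply: (@leq_bigmax_cond _ (mem e) (fun x => #|lines F x|)).
have s1 : \sum_(x in e) (#|lines F x| - 1) <= k * (D - 1).
  rewrite -ce -sum_nat_const; apply: leq_sum => x xe; have := leD x xe; lia.
have h0 := lb x0; rewrite -Dx0 in h0.
have [hD hDelta] := arith1 k2 h0 dV cV (leq_trans big (leq_trans nb s1)).
split => // y ye.
have yb := leD y ye.
rewrite (bigD1 y ye) /= in nb.
set S' := (X in _ <= _ + X) in nb.
have : S' <= (k - 1) * k.
  rewrite /S'.
  have -> : k - 1 = #|e :\ y| by move: (cardsD1 y e); rewrite ye ce; lia.
  rewrite -sum_nat_const.
  have -> : \sum_(x in e | x != y) (#|lines F x| - 1) = \sum_(x in e :\ y) (#|lines F x| - 1).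
    by apply: eq_bigl => i; rewrite !inE andbC.
  apply: leq_sum => x; rewrite inE => /andP[_ xe]; have := leD x xe; lia.
have : (k-1)*k = k^2 - k by nia.
have : k <= k ^ 2 by nia.
move=> a1 a2 a3; move: nb yb big a3; rewrite hD hDelta.
move: S' (#|lines F y|) (#|nbr F e|) => S d N; lia.
Qed.

Definition pc (V : finType) (F : {set {set V}}) m (c : {ffun {set V} -> 'I_m}) :=
  forall e f, e \in F -> f \in F -> e != f -> e :&: f != set0 -> c e != c f.

Lemma color_from (V : finType) (F : {set {set V}}) (T : finType) (g : {set V} -> T)
  (S : {set T}) m :
  (forall e, e \in F -> g e \in S) -> #|S| <= m.+1 ->
  (forall e f, e \in F -> f \in F -> e != f -> e :&: f != set0 -> g e != g f) ->
  exists c : {ffun {set V} -> 'I_m.+1}, pc F c.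
Proof.
move=> gS cS gp; exists [ffun e => inord (index (g e) (enum S))].
move=> e f eF fF ef ne; rewrite !ffunE; apply: contra (gp e f eF fF ef ne) => /eqP h.
have ie : index (g e) (enum S) < m.+1.
  by apply: leq_trans cS; rewrite cardE index_mem mem_enum gS.
have i_f : index (g f) (enum S) < m.+1.
  by apply: leq_trans cS; rewrite cardE index_mem mem_enum gS.
have := congr1 val h; rewrite /= !inordK // => h2.
apply/eqP; have eS : g e \in enum S by rewrite mem_enum gS.
have fS : g f \in enum S by rewrite mem_enum gS.

by rewrite -[g e](nth_index (g e) eS) h2 (nth_index _ fS).
Qed.

Lemma arith2 k F W : 2 <= k -> k * F = (k + 1) * W -> k ^ 2 <= W ->
  W <= k ^ 2 + k - 2 -> W = k ^ 2.
Proof.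
move=> k2 h1 h2 h3.
have : k %| (k + 1) * W by apply/dvdnP; exists F; lia.
rewrite addn1 Gauss_dvdr ?coprimenS // => /dvdnP[q hq].
subst W.
have q1 : k <= q.
  by move: h2; rewrite -mulnn leq_pmul2r //; lia.
have q2 : q < k + 1.
  have : q * k < (k + 1) * k by lia.
  by rewrite ltn_pmul2r //; lia.
have -> : q = k by lia.
by rewrite mulnn.
Qed.

Lemma tight_color (V : finType) k (E F : {set {set V}}) :
  2 <= k -> F \subset E -> uniform_hg k E -> linear_hg E ->
  #|V| <= k ^ 2 + k - 2 -> F != set0 ->
  (forall e, e \in F -> sec2_maxdeg E + 1 <= #|nbr F e|) ->
  exists c : {ffun {set V} -> 'I_(sec2_maxdeg E).+1}, pc F c.
Proof.
move=> k2 FE uni lin cV Fn0 Ht.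
have inE' : forall f, f \in F -> f \in E by move=> f; apply: (subsetP FE).
have cf : forall f, f \in F -> #|f| = k by move=> f /inE'; apply: uni.
set W := \bigcup_(f in F) f.
have Wof : forall f x, f \in F -> x \in f -> x \in W.
  by move=> f x fF xf; apply/bigcupP; exists f.
have dW : forall x, x \in W -> #|lines F x| = k + 1.
  by move=> x /bigcupP[f fF xf]; have [_ h] := tight k2 FE uni lin cV fF (Ht f fF); apply: h.
have [f0 f0F] : exists f0, f0 \in F by apply/set0Pn.
have Delta : sec2_maxdeg E = k ^ 2 - 1 by have [h _] := tight k2 FE uni lin cV f0F (Ht f0 f0F).
have d0 : forall x, x \notin W -> lines F x = set0.
  move=> x xW; apply/setP => f; rewrite !inE; apply/negbTE/negP => /andP[fF xf].
  by move/negP: xW; apply; apply: Wof xf.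
have dc : \sum_(f in F) #|f| = \sum_x #|lines F x|.
  transitivity (\sum_(f in F) \sum_x (x \in f : nat)).
    apply: eq_bigr => f _; rewrite -sum1_card big_mkcond; apply: eq_bigr => x _.
    by case: (x \in f).
  rewrite exchange_big; apply: eq_bigr => x _.
  rewrite -sum1_card big_mkcond [in RHS]big_mkcond /=; apply: eq_bigr => f _; rewrite inE.
  by case: (f \in F); case: (x \in f).
have dcW : \sum_x #|lines F x| = #|W| * (k + 1).
  rewrite (bigID (mem W)) /= [X in _ + X]big1 ?addn0; last first.
    by move=> x xW; rewrite d0 ?cards0.
  rewrite -sum_nat_const; apply: eq_bigr => x xW; exact: dW.
have LF : \sum_(f in F) #|f| = #|F| * k.
  by rewrite -sum_nat_const; apply: eq_bigr => f fF; apply: cf.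
have starW : forall x, x \in W -> x |: ustar F x \subset W.
  move=> x xW; apply/subsetP => y; rewrite !inE => /orP[/eqP -> //|].
  move/bigcupP => [f]; rewrite !inE => /andP[fF _] /andP[_ yf]; exact: Wof yf.
have cstar : forall x, x \in W -> #|x |: ustar F x| = k ^ 2.
  move=> x xW; rewrite cardsU1 (card_ustar x FE uni lin).
  have -> : x \notin ustar F x.
    by apply/negP => /bigcupP[f _]; rewrite !inE eqxx.
  rewrite dW //; have : (k - 1) * (k + 1) = k ^ 2 - 1 by nia.
  have : 1 <= k ^ 2 by nia.
  lia.
have [x0 x0W] : exists x0, x0 \in W.
  have : 0 < #|f0| by rewrite cf //; lia.
  by rewrite card_gt0 => /set0Pn[x xf]; exists x; apply: Wof xf.
have cW : #|W| = k ^ 2.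
  apply: (@arith2 k #|F|) => //.
  - by move: dc; rewrite LF dcW; lia.
  - by rewrite -(cstar x0 x0W); apply: subset_leq_card; apply: starW.
  - by apply: leq_trans cV; apply: max_card.
have span : forall x y, x \in W -> y \in W -> x != y -> exists2 f, f \in lines F x & y \in f.
  move=> x y xW yW xy.
  have : x |: ustar F x == W.
    rewrite eqEcard (starW x xW) /= (cstar x xW) cW //.
  move/eqP => eW; move: yW; rewrite -eW !inE eq_sym (negbTE xy) /=.
  by move/bigcupP => [f fl]; rewrite inE => /andP[_ yf]; exists f.
pose phi q a := odflt set0 [pick M in lines F q | a \in M].
have phiP : forall q a, q \in W -> a \in W -> q != a -> phi q a \in lines F q /\ a \in phi q a.
  move=> q a qW aW qa; rewrite /phi; case: pickP => [M /andP[H1 H2] | none] //=.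
  have [f fl af] := span q a qW aW qa.
  by have := none f; rewrite fl af.
have linesP : forall f x, f \in lines F x -> f \in F /\ x \in f.
  by move=> f x; rewrite inE => /andP[].
have notimg : forall (q : V) (L h : {set V}), q \in W -> q \notin L -> L \in F -> h :&: L = set0 -> h \notin phi q @: L.
  move=> q L h qW qL LF' hL; apply/imsetP => -[a aL eh].
  have qa : q != a by apply: contraNneq qL => ->.
  have [_ ah] := phiP q a qW (Wof _ _ LF' aL) qa.
  have : a \in h :&: L by rewrite inE eh ah aL.
  by rewrite hL inE.
have phi_inj : forall (q : V) (L : {set V}), q \in W -> q \notin L -> L \in F -> {in L &, injective (phi q)}.
  move=> q L qW qL LF' a b aL bL eab; apply/eqP; apply: contraT => ab.
  have qa : q != a by apply: contraNneq qL => ->.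
  have qb : q != b by apply: contraNneq qL => ->.
  have [m1 am] := phiP q a qW (Wof _ _ LF' aL) qa.
  have [m2 bm] := phiP q b qW (Wof _ _ LF' bL) qb.
  rewrite -eab in bm.
  have [m1F qm1] := linesP _ _ m1.
  have eL := lin2 lin (inE' _ m1F) (inE' _ LF') am aL bm bL ab.
  by move: qL; rewrite -eL qm1.
have uniq_par : forall (L : {set V}) (q : V) (f g : {set V}), L \in F -> q \in W -> q \notin L -> f \in lines F q ->
    g \in lines F q -> f :&: L = set0 -> g :&: L = set0 -> f = g.
  move=> L q f g LF' qW qL fl gl fL gL; apply/eqP; apply: contraT => fg.
  have sub : f |: (g |: (phi q @: L)) \subset lines F q.
    apply/subsetP => h; case/setU1P => [-> //|]; case/setU1P => [-> //|].
    move/imsetP => [a aL ->].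
    have qa : q != a by apply: contraNneq qL => ->.
    by have [] := phiP q a qW (Wof _ _ LF' aL) qa.
  move: (subset_leq_card sub); rewrite dW // !cardsU1 card_in_imset; last exact: phi_inj.
  rewrite (notimg q L g) // in_setU1 negb_or fg (notimg q L f) // cf //; lia.
have exists_par : forall (e : {set V}) (p : V), e \in F -> p \in W ->
    exists2 L, L \in lines F p & (L == e) || (L :&: e == set0).
  move=> e p eF pW; case: (boolP (p \in e)) => pe.
    by exists e; rewrite ?inE ?eF ?pe ?eqxx.
  case: (pickP (fun L => (L \in lines F p) && (L :&: e == set0))) => [L /andP[H1 H2] | none].
    by exists L; rewrite ?H1 ?H2 ?orbT.
  exfalso.
  have sub : lines F p \subset phi p @: e.
    apply/subsetP => M Ml; have := none M; rewrite Ml /= => /negbT /set0Pn [a].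
    rewrite inE => /andP[aM ae].
    have pa : p != a by apply: contraNneq pe => ->.
    have [m1 am] := phiP p a pW (Wof _ _ eF ae) pa.
    have [m1F pm1] := linesP _ _ m1.
    have [MF pM] := linesP _ _ Ml.
    have -> : M = phi p a by apply: (lin2 lin (inE' _ MF) (inE' _ m1F) pM pm1 aM am pa).
    by apply/imsetP; exists a.
  move: (leq_trans (subset_leq_card sub) (leq_imset_card _ _)).
  by rewrite dW // cf //; lia.
pose col e := odflt set0 [pick L in lines F x0 | (L == e) || (L :&: e == set0)].
have colP : forall e, e \in F -> col e \in lines F x0 /\ ((col e == e) || (col e :&: e == set0)).
  move=> e eF; rewrite /col; case: pickP => [L /andP[H1 H2] | none] //=.
  have [L Ll HL] := exists_par e x0 eF x0W.
  by have := none L; rewrite Ll HL.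
apply: (@color_from V F _ col (lines F x0)).
- by move=> e eF; have [] := colP e eF.
- by rewrite dW // Delta; nia.
move=> e f eF fF ef ne; apply/negP => /eqP cef.
have [c1 h1] := colP e eF; have [_ h2] := colP f fF.
rewrite -cef in h2; set L := col e in c1 h1 h2 cef.
case/orP: h1 => [/eqP Le | /eqP Le].
  case/orP: h2 => [/eqP Lf | /eqP Lf].
    by move/negP: ef; apply; rewrite -Le -Lf.
  by move/negP: ne; apply; rewrite -Le Lf.
case/orP: h2 => [/eqP Lf | /eqP Lf].
  by move/negP: ne; apply; rewrite -Lf setIC Le.
have [q] := set0Pn _ ne; rewrite inE => /andP[qe qf].
have [LF' _] := linesP _ _ c1.
have qL : q \notin L.
  apply/negP => qL'; have : q \in L :&: e by rewrite inE qL' qe.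
  by rewrite Le inE.
have qW := Wof _ _ eF qe.
have el : e \in lines F q by rewrite inE eF qe.
have fl : f \in lines F q by rewrite inE fF qf.
have eL : e :&: L = set0 by rewrite setIC.
have fL : f :&: L = set0 by rewrite setIC.
have := uniq_par L q e f LF' qW qL el fl eL fL.
by move/eqP: ef.
Qed.

Lemma degen (V : finType) k (E : {set {set V}}) :
  2 <= k -> uniform_hg k E -> linear_hg E -> #|V| <= k ^ 2 + k - 2 ->
  forall n (F : {set {set V}}), #|F| = n -> F \subset E ->
  exists c : {ffun {set V} -> 'I_(sec2_maxdeg E).+1}, pc F c.
Proof.
move=> k2 uni lin cV; set D := sec2_maxdeg E.
elim=> [|n IH] F cF FE.
  exists [ffun=> ord0] => e f eF; move: cF => /eqP; rewrite cards_eq0 => /eqP F0.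
  by rewrite F0 inE in eF.
case: (pickP (fun e => (e \in F) && (#|nbr F e| <= D))) => [e /andP[eF small] | none].
  have [c pcc] := IH (F :\ e) (ltac:(by move: cF; rewrite (cardsD1 e) eF add1n => -[]))
    (subset_trans (subsetDl F [set e]) FE).
  set U := [set c f | f in nbr F e].
  have cU : #|U| <= D by apply: leq_trans (leq_imset_card _ _) small.
  have [col colU] : exists col, col \notin U.
    have : 0 < #|~: U| by rewrite cardsCs setCK card_ord; lia.
    by rewrite card_gt0 => /set0Pn[col]; rewrite inE => ?; exists col.
  exists [ffun f => if f == e then col else c f].
  have nbrP : forall f, f \in F -> f != e -> f :&: e != set0 -> c f \in U.
    by move=> f fF fe fne; apply/imsetP; exists f; rewrite // inE fF fe fne.
  move=> f g fF gF fg ne; rewrite !ffunE.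
  case: (eqVneq f e) => [fe|fe]; case: (eqVneq g e) => [ge|ge].
  - by move: fg; rewrite fe ge eqxx.
  - subst f; apply/negP => /eqP E1; move/negP: colU; apply; rewrite E1.
    by apply: nbrP => //; rewrite setIC.
  - subst g; apply/negP => /eqP E1; move/negP: colU; apply; rewrite -E1.
    exact: nbrP.
  - by apply: pcc; rewrite // !inE ?fe ?ge.
have Ht : forall e, e \in F -> D + 1 <= #|nbr F e|.
  by move=> e eF; have := none e; rewrite eF /= => /negbT; rewrite -ltnNge addn1.
apply: (tight_color k2 FE uni lin cV) => //.
by rewrite -card_gt0 cF.
Qed.

Theorem theorem5p2 (k : nat) (V : finType) (E : {set {set V}}) :
  2 <= k ->
  hypergraph E ->
  uniform_hg k E ->
  linear_hg E ->
  #|V| <= k ^ 2 + k - 2 ->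
  chromatic_index E <= sec2_maxdeg E + 1.
Proof.
move=> k2 _ uni lin cV.
have [c pcc] := degen k2 uni lin cV (erefl #|E|) (subxx E).
have col : edge_colorable E (sec2_maxdeg E).+1.
  apply/existsP; exists c; apply/forallP => e; apply/implyP => eE.
  apply/forallP => f; apply/implyP => fE; apply/implyP => /andP[ef ne].
  exact: pcc.
rewrite addn1 /chromatic_index; case: ex_minnP => m _ hmin; exact: hmin.
Qed.
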